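(* Let $K$ be a field of characteristic $p>0$ such that $K/k$ is a finitely generated field extension, where $k=\bigcap_{n\ge0}K^{p^n}$. Let $W_\bullet$ be a power tower on $K$, let $\mathcal{F}_i=T_{W_{i-1}/W_i}$ for $i\ge1$, and let $\mathcal{D}=\bigcup_{n\ge0}\operatorname{Diff}_{W_n}(K)$. Then for every $i\ge1$, $d(K/W_{i-1})(\mathcal{D})\cap TW_{i-1}=\mathcal{F}_i$. In particular $\mathcal{D}\cap TK=T_{K/W_1}$.
   Context: A power tower on $K$ is a sequence of subfields $W_0,W_1,\ldots$ with $W_j=W_i\cdot K^{p^j}$ whenever $j\le i$ ($\cdot$ = compositum in $K$; so $W_0=K$). For a field $F$, $TF$ is the space of derivations of $F$, $T_{F/A}$ those vanishing on a subfield $A$. For subfields $A\subseteq B$, $\operatorname{Diff}_A(B)$ is the union over $n$ of the $A$-linear maps $D:B\to B$ with $[b_0,[b_1,[\ldots,[b_n,D]\ldots]]]=0$ for all $b_i\in B$. For $k\subseteq W\subseteq K$, $d(K/W)$ sends $D\in\operatorname{Diff}_k(K)$ to its restriction $D|_W:W\to K$, an element of $\operatorname{Diff}_k(W)\otimes_W K$, identified with the $K$-span of $\iota\circ E$ ($E\in\operatorname{Diff}_k(W)$, $\iota:W\to K$ the inclusion) in $\operatorname{Hom}(W,K)$; $TW$ is viewed inside it via $E\mapsto \iota\circ E$. $d(K/K)$ is the identity. *)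

(* Defs.v *)
From mathcomp Require Import all_boot all_algebra.
Set Implicit Arguments. Unset Strict Implicit. Unset Printing Implicit Defensive.
Import GRing.Theory.
Local Open Scope ring_scope.

Section Defs.
Variable K : fieldType.

Definition is_subfield (A : K -> Prop) : Prop :=
  [/\ A 0, A 1,
      (forall x y, A x -> A y -> A (x - y)),
      (forall x y, A x -> A y -> A (x * y)) &
      (forall x, A x -> A x^-1)].

Definition gen_subfield (S : K -> Prop) : K -> Prop :=
  fun x => forall F, is_subfield F -> (forall y, S y -> F y) -> F x.

Definition compositum (A B : K -> Prop) : K -> Prop :=
  gen_subfield (fun y => A y \/ B y).

Definition Kpow (p n : nat) : K -> Prop :=
  fun x => exists y : K, x = y ^+ (p ^ n)%N.

Definition perfect_core (p : nat) : K -> Prop :=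
  fun x => forall n, Kpow p n x.

Definition fin_gen_over (A : K -> Prop) : Prop :=
  exists s : seq K, forall x, gen_subfield (fun y => A y \/ y \in s) x.

Definition power_tower (p : nat) (W : nat -> K -> Prop) : Prop :=
  (forall i, is_subfield (W i)) /\
  (forall i j, (j <= i)%N -> forall x, W j x <-> compositum (W i) (Kpow p j) x).

(* E is a derivation of the subfield F (a map F -> F; values of E outside F
   are irrelevant) *)
Definition is_derivation (F : K -> Prop) (E : K -> K) : Prop :=
  [/\ (forall x, F x -> F (E x)),
      (forall x y, F x -> F y -> E (x + y) = E x + E y) &
      (forall x y, F x -> F y -> E (x * y) = x * E y + E x * y)].

Definition is_rel_derivation (F A : K -> Prop) (E : K -> K) : Prop :=
  is_derivation F E /\ (forall a, A a -> E a = 0).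

Definition is_linear_over (A : K -> Prop) (D : K -> K) : Prop :=
  (forall x y, D (x + y) = D x + D y) /\
  (forall a x, A a -> D (a * x) = a * D x).

Definition comm_mul (b : K) (D : K -> K) : K -> K :=
  fun x => b * D x - D (b * x).

Fixpoint diff_order_le (n : nat) (D : K -> K) : Prop :=
  match n with
  | 0 => forall b x, comm_mul b D x = 0
  | m.+1 => forall b, diff_order_le m (comm_mul b D)
  end.

Definition is_diffop (A : K -> Prop) (D : K -> K) : Prop :=
  is_linear_over A D /\ exists n, diff_order_le n D.

Definition in_calD (W : nat -> K -> Prop) (D : K -> K) : Prop :=
  exists n, is_diffop (W n) D.

End Defs.
Arguments perfect_core : clear implicits.

(* Main.v *)
Require Import Defs.
From mathcomp Require Import all_boot all_algebra ring.
From Stdlib Require Import FunctionalExtensionality Classical ClassicalEpsilon.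
Import GRing.Theory.
Set Implicit Arguments. Unset Strict Implicit.
Local Open Scope ring_scope.

Section Basic.
Variable K : fieldType.
Implicit Types (F A B S : K -> Prop) (E D : K -> K).

Lemma gen_sub S x : S x -> gen_subfield S x.
Proof. by move=> Sx F _ /(_ x Sx). Qed.

Lemma gen_mono S S' x : (forall y, S y -> S' y) -> gen_subfield S x -> gen_subfield S' x.
Proof. by move=> SS' g F hF hS; apply: g => // y /SS'; apply: hS. Qed.

Lemma gen_min F S x : is_subfield F -> (forall y, S y -> F y) -> gen_subfield S x -> F x.
Proof. by move=> hF hS g; apply: g. Qed.

Lemma sf0 F : is_subfield F -> F 0. Proof. by case. Qed.
Lemma sf1 F : is_subfield F -> F 1. Proof. by case. Qed.
Lemma sfB F x y : is_subfield F -> F x -> F y -> F (x - y). Proof. by case=> _ _ h _ _; apply: h. Qed.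
Lemma sfM F x y : is_subfield F -> F x -> F y -> F (x * y). Proof. by case=> _ _ _ h _; apply: h. Qed.
Lemma sfV F x : is_subfield F -> F x -> F x^-1. Proof. by case=> _ _ _ _ h; apply: h. Qed.
Lemma sfN F x : is_subfield F -> F x -> F (- x).
Proof. by move=> hF Fx; rewrite -sub0r; apply: sfB => //; apply: sf0. Qed.
Lemma sfD F x y : is_subfield F -> F x -> F y -> F (x + y).
Proof. by move=> hF Fx Fy; rewrite -[y]opprK; apply: sfB => //; apply: sfN. Qed.
Lemma sfX F x n : is_subfield F -> F x -> F (x ^+ n).
Proof.
move=> hF Fx; elim: n => [|n IH]; first by rewrite expr0; apply: sf1.
by rewrite exprS; apply: sfM.
Qed.

Lemma der1 F E : is_subfield F -> is_derivation F E -> E 1 = 0.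
Proof.
move=> hF [_ _ hM]; have := hM 1 1 (sf1 hF) (sf1 hF).
rewrite mulr1 mul1r mulr1 => h.
by apply: (@addrI _ (E 1)); rewrite addr0 -h.
Qed.

Lemma derB F E x y : is_subfield F -> is_derivation F E -> F x -> F y ->
  E (x - y) = E x - E y.
Proof.
move=> hF [_ hA _] Fx Fy; have := hA (x - y) y (sfB hF Fx Fy) Fy.
rewrite subrK => ->; by rewrite addrK.
Qed.


Lemma derX F E x n : is_subfield F -> is_derivation F E -> F x ->
  E (x ^+ n) = n%:R * x ^+ n.-1 * E x.
Proof.
move=> hF hE Fx; elim: n => [|n IH]; first by rewrite expr0 (der1 hF hE) !mul0r.
have [_ _ hM] := hE; rewrite exprS (hM _ _ Fx (sfX n hF Fx)) IH.
case: n IH => [|n] IH; first by rewrite /= !expr0; ring.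
rewrite /= exprS -[n.+2]addn1 natrD; ring.
Qed.

Lemma der_ker F E : is_subfield F -> is_derivation F E ->
  is_subfield (fun x => F x /\ E x = 0).
Proof.
move=> hF hE; have [_ hA hM] := hE.
have E0 : E 0 = 0.
  have := hA 0 0 (sf0 hF) (sf0 hF); rewrite addr0 => h.
  by apply: (@addrI _ (E 0)); rewrite addr0 -h.
split.
- by split; first exact: sf0 hF.
- by split; [exact: sf1 hF | exact: der1 hF hE].
- move=> x y [Fx Ex] [Fy Ey]; split; first exact: sfB.
  by rewrite (derB hF hE Fx Fy) Ex Ey subr0.
- move=> x y [Fx Ex] [Fy Ey]; split; first exact: sfM.
  by rewrite hM // Ex Ey mulr0 mul0r addr0.
- move=> x [Fx Ex]; split; first exact: sfV.
  have [->|nz] := eqVneq x 0; first by rewrite invr0.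
  have := hM x x^-1 Fx (sfV hF Fx); rewrite mulfV // (der1 hF hE) Ex mul0r addr0.
  move/esym/eqP; rewrite mulf_eq0 (negbTE nz) /=; by move/eqP.
Qed.

Lemma derM_const F E a x : is_derivation F E -> F a -> F x -> E a = 0 ->
  E (a * x) = a * E x.
Proof. by case=> _ _ hM Fa Fx Ea; rewrite hM // Ea mul0r addr0. Qed.

End Basic.

Section Tower.
Variables (K : fieldType) (p : nat) (W : nat -> K -> Prop).
Hypothesis hW : power_tower p W.

Lemma tw_sf i : is_subfield (W i). Proof. by case: hW. Qed.

Lemma tw_mono j i x : (j <= i)%N -> W i x -> W j x.
Proof.
move=> ji Wx; case: hW => _ h; apply: (proj2 (h i j ji x)).
by apply: gen_sub; left.
Qed.

Lemma tw_pow j x : Kpow p j x -> W j x.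
Proof.
move=> Kx; case: hW => _ h; apply: (proj2 (h j j (leqnn j) x)).
by apply: gen_sub; right.
Qed.

Lemma tw0 x : W 0 x.
Proof. by apply: tw_pow; exists x; rewrite expn0 expr1. Qed.

Lemma tw_gen j i x : (j <= i)%N -> W j x -> compositum (W i) (Kpow p j) x.
Proof. by move=> ji; case: hW => _ h; apply: (proj1 (h i j ji x)). Qed.

End Tower.

Lemma fwd_dir (K : fieldType) (p : nat) (W : nat -> K -> Prop) :
  power_tower p W -> p \in [pchar K] ->
  forall i, (1 <= i)%N -> forall E, is_derivation (W i.-1) E ->
  forall D n, is_linear_over (W n) D -> (forall x, W i.-1 x -> D x = E x) ->
  forall a, W i a -> E a = 0.
Proof.
move=> hW hp i i1 E hE D n [_ hD] agree a Wa.
have sfB := tw_sf hW i.-1.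
pose m := maxn n i.
suff [] : W i.-1 a /\ E a = 0 by [].
apply: (gen_min (F := fun x => W i.-1 x /\ E x = 0) _ _ (tw_gen hW (leq_maxr n i) Wa)) => [|y].
  exact: der_ker.
case=> [Wy|[z ->]].
  have Wy' : W i.-1 y by apply: (tw_mono hW _ Wy); rewrite (leq_trans (leq_pred i)) ?leq_maxr.
  split => //.
  have Wny : W n y by apply: (tw_mono hW _ Wy); rewrite leq_maxl.
  rewrite -agree // -[y]mulr1 hD // agree; last exact: sf1 sfB.
  by have -> := der1 sfB hE; rewrite mulr0.
have Ww : W i.-1 (z ^+ (p ^ i.-1)) by apply: (tw_pow hW); exists z.
have -> : z ^+ (p ^ i) = (z ^+ (p ^ i.-1)) ^+ p.
  by rewrite -exprM -expnSr prednK.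
split; first exact: (sfX _ sfB Ww).
by rewrite (derX _ sfB hE Ww) (pcharf0 hp) !mul0r.
Qed.


Lemma iter_ad_formula (K : fieldType) (y : K) m (g : K -> K) x :
  iter m (comm_mul y) g x =
  \sum_(k < m.+1) ((y%:P - 'X)^+m)`_k * g (y ^+ k * x).
Proof.
elim: m x => [|m IH] x.
  by rewrite big_ord_recl big_ord0 expr0 coefC /= expr0 mul1r mul1r addr0.
rewrite iterS {1}/comm_mul !IH.
set P := (y%:P - 'X)^+m.
have szP : (size P <= m.+1)%N.
  apply: (leq_trans (size_poly_exp_leq _ _)).
  have -> : size (y%:P - 'X : {poly K}) = 2%N.
    by rewrite -opprB size_opp size_XsubC.
  by rewrite mul1n.
rewrite exprS mulrBl; symmetry.
under eq_bigr => k _ do rewrite coefB coefCM coefXM mulrBl.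
rewrite sumrB big_ord_recr /= (nth_default _ szP) mulr0 mul0r addr0 mulr_sumr.
congr (_ - _); first by apply: eq_bigr => k _; rewrite mulrA.
rewrite big_ord_recl /= mul0r add0r.
apply: eq_bigr => k _.
by rewrite /bump leq0n add0n add1n exprS mulrA [y * _]mulrC -mulrA.
Qed.

Lemma iter_ad_pchar (K : fieldType) p i (y : K) (g : K -> K) x :
  p \in [pchar K] ->
  iter (p ^ i) (comm_mul y) g x = y ^+ (p ^ i) * g x - g (y ^+ (p ^ i) * x).
Proof.
move=> hp; rewrite iter_ad_formula.
have hq : pnat [pchar {poly K}] (p ^ i)%N.
  rewrite (eq_pnat _ (pchar_poly K)) (eq_pnat _ (pcharf_eq hp)) pnatX.
  by rewrite pnat_id ?(pcharf_prime hp).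
have q0 : (0 < p ^ i)%N by rewrite expn_gt0 prime_gt0 ?(pcharf_prime hp).
rewrite exprDn_pchar // exprNn_pchar // -polyC_exp.
under eq_bigr => k _ do rewrite coefB coefC coefXn mulrBl.
rewrite sumrB big_ord_recl /= expr0 mul1r big1 ?addr0; last first.
  by move=> k _; rewrite mul0r.
congr (_ - _).
rewrite big_ord_recr /= big1 ?add0r ?eqxx ?mul1r //.
move=> k _; have := ltn_ord k; rewrite ltn_neqAle => /andP[/negPf -> _].
by rewrite mul0r.
Qed.

Section Order.
Variables (K : fieldType) (A : K -> Prop) (q : nat) (s : seq K).
Hypotheses (hA : is_subfield A) (q0 : (0 < q)%N) (hq : forall x, A (x ^+ q))
  (hgen : forall x, gen_subfield (fun y => A y \/ y \in s) x) (us : uniq s)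
  (hkill : forall y (g : K -> K) x,
     iter q (comm_mul y) g x = y ^+ q * g x - g (y ^+ q * x)).

Local Notation Fn := (K -> K).
Local Notation ad := (@comm_mul K).
Definition Alin (f : Fn) := is_linear_over A f.

Lemma all_of_ring (S : K -> Prop) : (forall a, A a -> S a) ->
  (forall y, y \in s -> S y) -> (forall x y, S x -> S y -> S (x - y)) ->
  (forall x y, S x -> S y -> S (x * y)) -> forall x, S x.
Proof.
move=> hAS hsS hB hM x; apply: (gen_min _ _ (hgen x)); last first.
  by move=> y [/hAS|/hsS].
have S1 : S 1 by apply: hAS; exact: sf1 hA.
split => //; first by apply: hAS; exact: sf0 hA.
move=> z Sz; have [->|nz] := eqVneq z 0; first by rewrite invr0; apply: hAS; exact: sf0 hA.
have SX : forall n, S (z ^+ n) by elim=> [|n IH]; rewrite ?expr0 // exprS; apply: hM.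
have -> : z^-1 = z ^+ q.-1 * (z ^+ q)^-1.
  by rewrite -{2}(prednK q0) exprS invfM mulrCA mulfV ?mulr1 // expf_neq0.
by apply: hM => //; apply: hAS; apply: (sfV hA (hq z)).
Qed.

Lemma ad_Alin b f : Alin f -> Alin (ad b f).
Proof.
case=> hadd hlin; split=> [x y|a x Aa]; rewrite /comm_mul.
  by rewrite !hadd !mulrDr !hadd; ring.
have -> : b * (a * x) = a * (b * x) by rewrite mulrCA.
by rewrite (hlin a (b * x) Aa) (hlin a x Aa); ring.
Qed.

Lemma foldr_Alin js f : Alin f -> Alin (foldr ad f js).
Proof. by move=> hf; elim: js => //= b js IH; apply: ad_Alin. Qed.

Lemma ad_comm b c g : ad b (ad c g) = ad c (ad b g).
Proof.
apply: functional_extensionality => x; rewrite /comm_mul.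
have -> : c * (b * x) = b * (c * x) by rewrite mulrCA.
ring.
Qed.

Definition Cop (c : Fn -> Fn) :=
  (forall g h, c (fun x => g x + h x) = (fun x => c g x + c h x)) /\
  (forall b g, c (ad b g) = ad b (c g)).

Lemma Cop0 c : Cop c -> c (fun _ => 0) = (fun _ => 0).
Proof.
case=> hadd _; have := hadd (fun _ => 0) (fun _ => 0).
have -> : (fun _ : K => (0 : K) + 0) = (fun _ => 0).
  by apply: functional_extensionality => x; rewrite addr0.
move=> h; apply: functional_extensionality => x.
have := congr1 (fun F => F x) h => /= e.
by apply: (@addrI _ (c (fun _ => 0) x)); rewrite addr0 -e.
Qed.

Lemma Cop_sum c I (t : seq I) (F : I -> Fn) : Cop c ->
  c (fun x => \sum_(i <- t) F i x) = fun x => \sum_(i <- t) c (F i) x.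
Proof.
move=> hc; elim: t => [|a t IH].
  have -> : (fun x : K => \sum_(i <- [::]) F i x) = (fun _ => 0).
    by apply: functional_extensionality => x; rewrite big_nil.
  rewrite (Cop0 hc); apply: functional_extensionality => x; by rewrite big_nil.
have -> : (fun x : K => \sum_(i <- a :: t) F i x) =
          (fun x => F a x + (fun y => \sum_(i <- t) F i y) x).
  by apply: functional_extensionality => x; rewrite big_cons.
case: (hc) => hadd _; rewrite hadd IH.
by apply: functional_extensionality => x; rewrite big_cons.
Qed.

Lemma Cop_id : Cop id. Proof. by []. Qed.

Lemma Cop_zero : Cop (fun _ _ => 0).
Proof.
split=> [g h|b g]; apply: functional_extensionality => x; first by rewrite addr0.
by rewrite /comm_mul mulr0 subr0.
Qed.

Lemma Cop_L b : Cop (fun g x => b * g x).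
Proof.
split=> [g h|c g]; apply: functional_extensionality => x; rewrite /comm_mul.
  by rewrite mulrDr.
ring.
Qed.

Lemma Cop_R c : Cop (fun g x => g (c * x)).
Proof.
split=> [g h|b g]; apply: functional_extensionality => x; rewrite /comm_mul //.
by rewrite mulrCA.
Qed.

Lemma Cop_comp c1 c2 : Cop c1 -> Cop c2 -> Cop (fun g => c1 (c2 g)).
Proof.
case=> a1 d1 [a2 d2]; split=> [g h|b g]; first by rewrite a2 a1.
by rewrite d2 d1.
Qed.

Lemma Cop_add c1 c2 : Cop c1 -> Cop c2 -> Cop (fun g x => c1 g x + c2 g x).
Proof.
case=> a1 d1 [a2 d2]; split=> [g h|b g]; apply: functional_extensionality => x.
  by rewrite a1 a2 /=; ring.
by rewrite d1 d2 /comm_mul; ring.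
Qed.

Lemma Cop_sub c1 c2 : Cop c1 -> Cop c2 -> Cop (fun g x => c1 g x - c2 g x).
Proof.
case=> a1 d1 [a2 d2]; split=> [g h|b g]; apply: functional_extensionality => x.
  by rewrite a1 a2 /=; ring.
by rewrite d1 d2 /comm_mul; ring.
Qed.

Definition Good b := exists cs : K -> Fn -> Fn, (forall y, Cop (cs y)) /\
  forall f, Alin f -> ad b f = fun x => \sum_(y <- s) cs y (ad y f) x.

Lemma Good_A a : A a -> Good a.
Proof.
move=> Aa; exists (fun _ _ _ => 0); split=> [y|f [_ hlin]]; first exact: Cop_zero.
apply: functional_extensionality => x.
by rewrite big1 // /comm_mul hlin // subrr.
Qed.

Lemma Good_s y : y \in s -> Good y.
Proof.
move=> ys; exists (fun z g => if z == y then g else (fun _ => 0)); split.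
  by move=> z; case: (z == y); [exact: Cop_id | exact: Cop_zero].
move=> f _; apply: functional_extensionality => x.
rewrite (bigD1_seq y) //= eqxx big1 ?addr0 //.
by move=> z /negPf ->.
Qed.

Lemma Good_sub b c : Good b -> Good c -> Good (b - c).
Proof.
move=> [c1 [h1 r1]] [c2 [h2 r2]].
exists (fun y g x => c1 y g x - c2 y g x); split=> [y|f hf].
  exact: Cop_sub.
apply: functional_extensionality => x.
rewrite sumrB.
have := congr1 (fun F => F x) (r1 _ hf) => /= <-.
have := congr1 (fun F => F x) (r2 _ hf) => /= <-.
rewrite /comm_mul mulrBl.
have -> : (b - c) * x = b * x - c * x by rewrite mulrBl.
case: hf => hadd _.
have -> : f (b * x - c * x) = f (b * x) - f (c * x).
  by apply: (@addIr _ (f (c * x))); rewrite -hadd !subrK.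
ring.
Qed.

Lemma Good_mul b c : Good b -> Good c -> Good (b * c).
Proof.
move=> [c1 [h1 r1]] [c2 [h2 r2]].
exists (fun y g x => b * c2 y g x + c1 y (fun z => g (c * z)) x); split=> [y|f hf].
  by apply: Cop_add; [exact: (Cop_comp (Cop_L b) (h2 y)) | exact: (Cop_comp (h1 y) (Cop_R c))].
have hfc : Alin (fun z => f (c * z)).
  case: (hf) => hadd hlin; split=> [x y|a x Aa]; first by rewrite mulrDr hadd.
  by rewrite mulrCA (hlin a (c * x) Aa).
apply: functional_extensionality => x.
rewrite big_split /= -mulr_sumr.
have := congr1 (fun F => F x) (r2 _ hf) => /= <-.
have -> : \sum_(i <- s) c1 i (fun z : K => ad i f (c * z)) x =
          \sum_(i <- s) c1 i (ad i (fun z => f (c * z))) x.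
  apply: eq_bigr => y _; congr (c1 y _ x).
  apply: functional_extensionality => z; rewrite /comm_mul.
  by rewrite mulrCA.
have := congr1 (fun F => F x) (r1 _ hfc) => /= <-.
rewrite /comm_mul. have -> : b * c * x = b * (c * x) by rewrite mulrA. have -> : c * (b * x) = b * (c * x) by rewrite mulrCA.
ring.
Qed.

Lemma Good_all b : Good b.
Proof.
apply: all_of_ring b; [exact: Good_A | exact: Good_s | exact: Good_sub | exact: Good_mul].
Qed.

Definition term := ((Fn -> Fn) * seq K * Fn)%type.
Definition tval (z : term) : Fn := z.1.1 (foldr ad z.2 z.1.2).
Definition tsum (t : seq term) : Fn := fun x => \sum_(z <- t) tval z x.
Definition okt N (z : term) :=
  [/\ Cop z.1.1, size z.1.2 = N, all (fun y => y \in s) z.1.2 & Alin z.2].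
Fixpoint okl N (t : seq term) : Prop :=
  if t is z :: t' then okt N z /\ okl N t' else True.

Lemma okl_cat N t1 t2 : okl N t1 -> okl N t2 -> okl N (t1 ++ t2).
Proof. by elim: t1 => //= z t1 IH [h1 h2] h; split => //; apply: IH. Qed.

Lemma okl_map N (r : seq K) (F : K -> term) :
  (forall y, y \in r -> okt N (F y)) -> okl N (map F r).
Proof.
elim: r => //= y r IH h; split; first by apply: h; rewrite inE eqxx.
by apply: IH => z zr; apply: h; rewrite inE zr orbT.
Qed.

Lemma tsum_cat t1 t2 x : tsum (t1 ++ t2) x = tsum t1 x + tsum t2 x.
Proof. by rewrite /tsum big_cat. Qed.

Lemma step N b t : okl N t -> exists t', okl N.+1 t' /\ ad b (tsum t) = tsum t'.
Proof.
have [cs [hcs hrep]] := Good_all b.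
elim: t => [|z t IH] /=.
  move=> _; exists [::]; split => //.
  by apply: functional_extensionality => x; rewrite /comm_mul /tsum !big_nil mulr0 subr0.
case=> [[hc hsz hall hf] /IH [t1 [ok1 e1]]].
pose W := foldr ad z.2 z.1.2.
have hW : Alin W by apply: foldr_Alin.
exists (map (fun y => ((fun g => z.1.1 (cs y g)), y :: z.1.2, z.2)) s ++ t1).
split.
  apply: okl_cat => //; apply: okl_map => y ys; split => //=.
  - exact: (Cop_comp hc (hcs y)).
  - by rewrite hsz.
  - by rewrite ys hall.
apply: functional_extensionality => x.
rewrite tsum_cat -e1.
rewrite /tsum big_map /comm_mul !big_cons.
case: (hc) => _ hcad.
set T := tval z x; set T' := tval z (b * x).
set S := \sum_(j <- t) tval j x; set S' := \sum_(j <- t) tval j (b * x).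
have -> : b * (T + S) - (T' + S') = (b * T - T') + (b * S - S') by ring.
congr (_ + _).
transitivity (ad b (z.1.1 W) x); first by [].
by rewrite -hcad (hrep _ hW) (Cop_sum _ _ hc).
Qed.

Lemma rep bs f : Alin f -> all (fun y => true) bs ->
  exists t, okl (size bs) t /\ foldr ad f bs = tsum t.
Proof.
move=> hf _; elim: bs => [|b bs [t [ok e]]] /=.
  exists [:: (id, [::], f)]; split => //.
  by apply: functional_extensionality => x; rewrite /tsum big_seq1.
by rewrite e; apply: step.
Qed.

Lemma extract y js f : y \in js -> foldr ad f js = ad y (foldr ad f (rem y js)).
Proof.
elim: js => //= z js IH; rewrite inE; have [->|ne] := eqVneq y z.
  by [].
move=> /= yjs.
by rewrite (IH yjs) ad_comm.
Qed.

Lemma extract_k k y js f : (k <= count_mem y js)%N ->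
  exists js', foldr ad f js = iter k (ad y) (foldr ad f js').
Proof.
elim: k js => [|k IH] js hk; first by exists js.
have yjs : y \in js by rewrite -has_pred1 has_count (leq_trans _ hk).
have [|js' e] := IH (rem y js).
  move/permP: (perm_to_rem yjs) => /(_ (pred1 y)) /= hc.
  by move: hk; rewrite hc eqxx add1n ltnS.
by exists js'; rewrite (extract f yjs) e.
Qed.

Lemma kill y g : Alin g -> iter q (ad y) g = fun _ => 0.
Proof.
case=> _ hlin; apply: functional_extensionality => x.
by rewrite hkill hlin // subrr.
Qed.

Lemma size_count js : all (fun y => y \in s) js ->
  size js = (\sum_(y <- s) count_mem y js)%N.
Proof.
elim: js => [|z js IH] /=; first by rewrite big1.
case/andP=> zs /IH ->; rewrite big_split /=.
rewrite -add1n; congr (_ + _)%N.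
have := count_uniq_mem z us; rewrite zs /= => <-.
rewrite -sum1_count big_mkcond /=.
by apply: eq_bigr => y _; rewrite eq_sym; case: (_ == _).
Qed.

Lemma sum_le (r : seq K) (F : K -> nat) m :
  (forall y, y \in r -> F y <= m)%N -> (\sum_(y <- r) F y <= size r * m)%N.
Proof.
elim: r => [|y r IH] h; first by rewrite big_nil.
rewrite big_cons /= mulSn leq_add //; first by apply: h; rewrite inE eqxx.
by apply: IH => z zr; apply: h; rewrite inE zr orbT.
Qed.

Lemma pigeon js : all (fun y => y \in s) js -> (size s * q.-1 < size js)%N ->
  exists y, (q <= count_mem y js)%N.
Proof.
move=> hall hsz.
case: (boolP (has (fun y => q <= count_mem y js)%N s)) => [/hasP [y _ h]|/hasPn h].
  by exists y.
move: hsz; rewrite (size_count hall) ltnNge (sum_le (m := q.-1)) //.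
by move=> y /h; rewrite -ltnNge -(ltn_predK q0) ltnS.
Qed.

Lemma order_of_foldr n (D : Fn) :
  (forall bs, size bs = n.+1 -> forall x, foldr ad D bs x = 0) -> diff_order_le n D.
Proof.
elim: n D => [|n IH] D h /=.
  by move=> b x; apply: (h [:: b]).
move=> b; apply: IH => bs hbs x.
have := h (bs ++ [:: b]); rewrite foldr_cat /=; apply.
by rewrite size_cat hbs addn1.
Qed.

Lemma tval0 z : okt (size s * q.-1).+1 z -> tval z = fun _ => 0.
Proof.
case=> hc hsz hall hf.
have [y hy] : exists y, (q <= count_mem y z.1.2)%N by apply: pigeon hall _; rewrite hsz.
have [js' e] := extract_k z.2 hy.
rewrite /tval e kill; [exact: Cop0 hc | exact: foldr_Alin].
Qed.

Lemma Alin_order f : Alin f -> diff_order_le (size s * q.-1) f.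
Proof.
move=> hf; apply: order_of_foldr => bs hbs x.
have [t [ok ->]] := rep hf (all_predT bs).
rewrite hbs in ok; rewrite /tsum.
elim: t ok => [|z t IH] /= ok; first by rewrite big_nil.
by case: ok => hz ok; rewrite big_cons IH // (tval0 hz) addr0.
Qed.

End Order.


Section Proj.
Variables (K : fieldType) (B : K -> Prop).
Hypothesis hB : is_subfield B.

Definition Span (L : seq K) (x : K) := exists t : seq (K * K),
  (forall z, List.In z t -> B z.1 /\ z.2 \in L) /\ x = \sum_(z <- t) z.1 * z.2.

Lemma Span0 L : Span L 0.
Proof. by exists [::]; split => //; rewrite big_nil. Qed.

Lemma SpanD L x y : Span L x -> Span L y -> Span L (x + y).
Proof.
case=> t1 [h1 e1]; case=> t2 [h2 e2]; exists (t1 ++ t2); split; last by rewrite big_cat e1 e2.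
by move=> z hz; case: (List.in_app_or _ _ _ hz) => [/h1|/h2].
Qed.

Lemma Span_mulmap L L' c x : (forall m, m \in L -> Span L' (c * m)) ->
  Span L x -> Span L' (c * x).
Proof.
move=> hm [t [ht ->]]; elim: t ht => [|z t IH] ht.
  by rewrite big_nil mulr0; apply: Span0.
rewrite big_cons mulrDr; apply: SpanD; last by apply: IH => w hw; apply: ht; right.
have [Bz Lz] := ht z (or_introl erefl).
have [t' [ht' e]] := hm _ Lz.
exists (map (fun w => (z.1 * w.1, w.2)) t'); split.
  move=> w /List.in_map_iff [w' [<- /ht' [Bw Lw]]] /=; split => //.
  exact: sfM.
rewrite big_map mulrCA e mulr_sumr; apply: eq_bigr => w _ /=; by rewrite mulrA.
Qed.

Lemma Span_gen L m : m \in L -> Span L m.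
Proof.
move=> Lm; exists [:: (1, m)]; split; last by rewrite big_seq1 mul1r.
by move=> z [<-|] //; split => //; apply: sf1.
Qed.

Lemma SpanZ L b x : B b -> Span L x -> Span L (b * x).
Proof.
move=> Bb; apply: Span_mulmap => m Lm; exists [:: (b, m)]; split; last by rewrite big_seq1.
by move=> z [<-|].
Qed.

Lemma SpanN L x : Span L x -> Span L (- x).
Proof. by move=> h; rewrite -mulN1r; apply: SpanZ => //; apply: sfN => //; apply: sf1. Qed.

Lemma SpanB L x y : Span L x -> Span L y -> Span L (x - y).
Proof. by move=> hx hy; apply: SpanD => //; apply: SpanN. Qed.

Lemma Span_mono L L' x : {subset L <= L'} -> Span L x -> Span L' x.
Proof.
move=> sub [t [ht e]]; exists t; split => // z /ht [Bz Lz]; split => //.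
exact: sub.
Qed.

Lemma Span_cons g L x : Span (g :: L) x ->
  exists v b, [/\ Span L v, B b & x = v + b * g].
Proof.
case=> t [ht ->]; elim: t ht => [|z t IH] ht.
  by exists 0, 0; split; [apply: Span0 | apply: sf0 | rewrite big_nil mul0r addr0].
have [v [b [Sv Bb e]]] := IH (fun w hw => ht w (or_intror hw)).
have [Bz] := ht z (or_introl erefl); rewrite inE; case: eqP => [e2 _|_ Lz].
  exists v, (z.1 + b); split => //; first exact: sfD.
  by rewrite big_cons e mulrDl e2; ring.
exists (z.1 * z.2 + v), b; split => //.
  by apply: SpanD => //; apply: SpanZ => //; apply: Span_gen.
by rewrite big_cons e addrA.
Qed.

Lemma Span_base x : Span [:: 1] x -> B x.
Proof.
case=> t [ht ->]; elim: t ht => [|z t IH] ht; first by rewrite big_nil; apply: sf0.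
rewrite big_cons; apply: sfD => //; last by apply: IH => w hw; apply: ht; right.
have [Bz] := ht z (or_introl erefl); rewrite inE => /eqP ->.
by rewrite mulr1.
Qed.

Definition proj_ok (M : seq K) (pi : K -> K) :=
  [/\ (forall x y, Span M x -> Span M y -> pi (x + y) = pi x + pi y),
      (forall b x, B b -> Span M x -> pi (b * x) = b * pi x),
      (forall x, Span M x -> B (pi x)) &
      (forall b, B b -> pi b = b)].

Lemma proj_ind L : exists pi, proj_ok (L ++ [:: 1]) pi.
Proof.
elim: L => [|g L [pi [hadd hlin hval hid]]].
  exists id; split => //=; exact: Span_base.
set M := L ++ [:: 1].
have M1 : 1 \in M by rewrite mem_cat inE eqxx orbT.
have SB : forall b, B b -> Span M b.
  by move=> b Bb; rewrite -[b]mulr1; apply: SpanZ => //; apply: Span_gen.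
case: (classic (Span M g)) => [Sg|nSg].
  have red : forall x, Span (g :: M) x -> Span M x.
    move=> x /Span_cons [v [b [Sv Bb ->]]]; apply: SpanD => //; exact: SpanZ.
  exists pi; split => /=.
  - by move=> x y /red hx /red hy; apply: hadd.
  - by move=> b x Bb /red hx; apply: hlin.
  - by move=> x /red; apply: hval.
  - exact: hid.
have uniq_dec : forall v v' b b', Span M v -> Span M v' -> B b -> B b' ->
    v + b * g = v' + b' * g -> v = v'.
  move=> v v' b b' Sv Sv' Bb Bb' e.
  have [ebb|nbb] := eqVneq b b'.
    by move: e; rewrite ebb => /addIr.
  exfalso; apply: nSg.
  have -> : g = (b' - b)^-1 * (v - v').
    have nz : b' - b != 0 by rewrite subr_eq0 eq_sym.
    apply: (@mulfI _ (b' - b)) => //; rewrite mulrA mulfV // mul1r.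
    have -> : v - v' = v + b * g - v' - b * g by ring.
    by rewrite e; ring.
  apply: SpanZ; first by apply: sfV => //; apply: sfB.
  exact: SpanB.
pose P x v := Span M v /\ exists b, B b /\ x = v + b * g.
pose vx x := epsilon (inhabits 0) (P x).
have vxP : forall x, Span (g :: M) x -> P x (vx x).
  move=> x /Span_cons [v [b [Sv Bb e]]]; apply: epsilon_spec.
  by exists v; split => //; exists b.
have vxE : forall x v b, Span M v -> B b -> x = v + b * g -> vx x = v.
  move=> x v b Sv Bb e.
  have [|Sx [b' [Bb' e']]] := vxP x.
    rewrite e; apply: SpanD; first by apply: (Span_mono _ Sv) => z zM; rewrite inE zM orbT.
    by apply: SpanZ => //; apply: Span_gen; rewrite inE eqxx.
  by apply: (uniq_dec _ _ _ _ Sx Sv Bb' Bb); rewrite -e' -e.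
exists (fun x => pi (vx x)); split => /=.
- move=> x y hx hy.
  have [Sx [bx [Bx ex]]] := vxP x hx; have [Sy [by_ [By ey]]] := vxP y hy.
  rewrite (vxE (x + y) (vx x + vx y) (bx + by_)) ?hadd //.
  + exact: SpanD.
  + exact: sfD.
  + by rewrite {1}ex {1}ey; ring.
- move=> b x Bb hx.
  have [Sx [bx [Bx ex]]] := vxP x hx.
  rewrite (vxE (b * x) (b * vx x) (b * bx)) ?hlin //.
  + exact: SpanZ.
  + exact: sfM.
  + by rewrite {1}ex; ring.
- by move=> x /vxP [Sx _]; apply: hval.
- move=> b Bb; rewrite (vxE b b 0) ?hid //; first exact: SB.
  + exact: sf0.
  + by rewrite mul0r addr0.
Qed.

Lemma proj_exists L : (forall x, Span L x) ->
  exists pi : K -> K, [/\ (forall x y, pi (x + y) = pi x + pi y),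
      (forall b x, B b -> pi (b * x) = b * pi x),
      (forall x, B (pi x)) &
      (forall b, B b -> pi b = b)].
Proof.
move=> hL; have [pi [h1 h2 h3 h4]] := proj_ind L.
have hS : forall x, Span (L ++ [:: 1]) x.
  by move=> x; apply: (Span_mono _ (hL x)) => z zL; rewrite mem_cat zL.
by exists pi; split => // *; [apply: h1 | apply: h2 | apply: h3].
Qed.

End Proj.


Section Spanning.
Variables (K : fieldType) (B : K -> Prop) (Q : nat).
Hypotheses (hB : is_subfield B) (Q0 : (0 < Q)%N) (hQ : forall x, B (x ^+ Q)).

Fixpoint mons (gs : seq K) : seq K :=
  if gs is g :: gs' then [seq g ^+ e * m | e <- iota 0 Q, m <- mons gs'] else [:: 1].

Lemma mons1 gs : 1 \in mons gs.
Proof.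
elim: gs => [|g gs IH] /=; first by rewrite inE.
have := allpairs_f (fun e m => g ^+ e * m) (_ : 0%N \in iota 0 Q) IH.
by rewrite expr0 mul1r; apply; rewrite mem_iota.
Qed.

Lemma mons_closed gs y m : y \in gs -> m \in mons gs -> Span B (mons gs) (y * m).
Proof.
elim: gs y m => // g gs IH y m yg /allpairsP [[e m'] [/= ei m'm ->]].
have ge : forall e' m'', (e' < Q)%N -> m'' \in mons gs -> g ^+ e' * m'' \in mons (g :: gs).
  move=> e' m'' he hm /=; apply: (allpairs_f (fun e m => g ^+ e * m)) => //.
  by rewrite mem_iota.
move: ei; rewrite mem_iota /= => ei.
case: (eqVneq y g) => [->|ne].
  rewrite mulrA -exprS.
  case: (ltnP e.+1 Q) => [lt|ge'].
    by apply: (Span_gen hB); apply: ge.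
  have -> : e.+1 = Q by apply/eqP; rewrite eqn_leq ge' ei.
  have -> : g ^+ Q * m' = g ^+ Q * (g ^+ 0 * m') by rewrite expr0 mul1r.
  apply: (SpanZ hB) => //; apply: (Span_gen hB); exact: ge.
move: yg; rewrite inE (negbTE ne) /= => ygs.
rewrite mulrCA; apply: (Span_mulmap hB (L := mons gs)); last exact: IH.
by move=> m'' hm''; apply: (Span_gen hB); apply: ge.
Qed.

Lemma span_all gs : (forall x, gen_subfield (fun y => B y \/ y \in gs) x) ->
  forall x, Span B (mons gs) x.
Proof.
move=> hgen.
pose S y := forall x, Span B (mons gs) x -> Span B (mons gs) (y * x).
have hS : forall y, S y.
  apply: (all_of_ring hB Q0 hQ hgen).
  - by move=> a Ba x hx; apply: (SpanZ hB).
  - by move=> y ys x hx; apply: (Span_mulmap hB (L := mons gs)) => // m hm; apply: mons_closed.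
  - move=> y1 y2 h1 h2 x hx; rewrite mulrBl; apply: (SpanB hB) => //; [exact: h1 | exact: h2].
  - by move=> y1 y2 h1 h2 x hx; rewrite -mulrA; apply: h1; apply: h2.
by move=> x; rewrite -[x]mulr1; apply: hS; apply: (Span_gen hB); apply: mons1.
Qed.

End Spanning.


Lemma tower_order (K : fieldType) p (W : nat -> K -> Prop) j (f : K -> K) :
  p \in [pchar K] -> fin_gen_over (perfect_core K p) -> power_tower p W ->
  is_linear_over (W j) f -> exists n, diff_order_le n f.
Proof.
move=> hp [s0 hs0] hW hf.
have pp := pcharf_prime hp.
eexists; apply: (@Alin_order K (W j) (p ^ j) (undup s0))  => //.
- exact: (tw_sf hW).
- by rewrite expn_gt0 prime_gt0.
- by move=> x; apply: (tw_pow hW); exists x.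
- move=> x; apply: (gen_mono _ (hs0 x)) => y [hy|hy].
    by left; apply: (tw_pow hW); apply: hy.
  by right; rewrite mem_undup.
- exact: undup_uniq.
- by move=> y g x; apply: iter_ad_pchar.
Qed.

Unset Implicit Arguments.

Theorem mainTheorem6 (K : fieldType) (p : nat) (W : nat -> K -> Prop) :
  prime p -> p \in [pchar K] ->
  fin_gen_over (perfect_core K p) ->
  power_tower p W ->
  (forall i : nat, (1 <= i)%N ->
     forall E : K -> K, is_derivation (W i.-1) E ->
       ((exists D : K -> K, in_calD W D /\ (forall x, W i.-1 x -> D x = E x))
        <-> is_rel_derivation (W i.-1) (W i) E)) /\
  (forall E : K -> K, is_derivation (fun _ => True) E ->
     (in_calD W E <-> is_rel_derivation (fun _ => True) (W 1%N) E)).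
Proof.
move=> pp hp hfg hW; split.
  move=> i i1 E hE; split.
    case=> D [[n [hlin _]] agree]; split => //.
    exact: (fwd_dir hW hp i1 hE hlin agree).
  case=> _ hvan.
  have hBsf := tw_sf hW i.-1.
  have AB : forall x, W i x -> W i.-1 x by move=> x; apply: (tw_mono hW (leq_pred i)).
  have hfg' := hfg; case: hfg' => s0 hs0.
  have genB : forall x, gen_subfield (fun y => W i.-1 y \/ y \in s0) x.
    move=> x; apply: (gen_mono _ (hs0 x)) => y [hy|hy]; last by right.
    by left; apply: (tw_pow hW); apply: hy.
  have hQ : forall x, W i.-1 (x ^+ (p ^ i.-1)) by move=> x; apply: (tw_pow hW); exists x.
  have Q0 : (0 < p ^ i.-1)%N by rewrite expn_gt0 prime_gt0.
  have [pi [padd plin pval pid]] := proj_exists hBsf (span_all hBsf Q0 hQ genB).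
  have [_ Eadd _] := hE.
  have hlin : is_linear_over (W i) (fun x => E (pi x)).
    split=> [x y|a x Aa]; first by rewrite padd Eadd.
    rewrite plin; [exact: (derM_const hE (AB _ Aa) (pval x) (hvan a Aa)) | exact: AB].
  exists (fun x => E (pi x)); split; last by move=> x Bx; rewrite pid.
  exists i; split => //; exact: (tower_order hp hfg hW hlin).
move=> E hE; split.
  case=> n [hlin _]; split => //.
  have hE0 : is_derivation (W 0) E.
    case: hE => _ h1 h2; split; [move=> x _; exact: (tw0 hW) | move=> x y _ _; exact: h1 | move=> x y _ _; exact: h2].
  exact: (fwd_dir hW hp (i := 1) (erefl _) hE0 hlin (fun x _ => erefl _)).
case=> _ hvan.
have hlin : is_linear_over (W 1) E.
  case: (hE) => _ h1 _; split=> [x y|a x Aa]; first exact: h1.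
  exact: (derM_const hE I I (hvan a Aa)).
exists 1%N; split => //; exact: (tower_order hp hfg hW hlin).
Qed.
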